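(* Let $K\ge1$, $p_D\in(0,1]$, $p^+\in(0,1)$, and let $\varphi^+=(\varphi^+_y)_{y\in[K]}$, $\varphi^-=(\varphi^-_y)_{y\in[K]}$ be fixed probability vectors (nonnegative entries summing to $1$). For unknowns $(q_y,q_y^+)_{y\in[K]}$ define, for $\hat y\in[K]$, \[ \Delta\mathrm{s.p.}(\hat y)=\frac{p_D}{p^+(1-p^+)}\Bigl(\varphi^+_{\hat y}(p^+-q^+)-(q_{\hat y}p^+-q^+_{\hat y})\Bigr)+(\varphi^+_{\hat y}-\varphi^-_{\hat y})\Bigl(1-p_D\frac{1-q^+}{1-p^+}\Bigr),\quad q^+:=\sum_{y}q_y^+. \] Set $b_y:=p^+(1-p^+)\frac{1-p_D}{p_D}(\varphi^+_y-\varphi^-_y)$ and $c_y:=(1-p^+)\varphi^+_y+p^+\varphi^-_y$. Then the values $(q_y,q_y^+)_{y}$ with $\sum_y q_y=1$ and $0\le q_y^+\le q_y$ for all $y$ satisfying $\Delta\mathrm{s.p.}(\hat y)=0$ for all $\hat y\in[K]$ are exactly those $(q_y,q_y^+)_y$ such that for all $y\in[K]$ \[ p^+q_y-q_y^+-\Bigl(p^+-\sum_{y'=1}^Kq^+_{y'}\Bigr)c_y-b_y=0,\qquad \sum_y q_y=1,\qquad 0\le q_y^+\le q_y. \] Furthermore, this set of solutions is non-empty if and only if \[ \{x\in\mathbb{R}^{K+1}: -(1-p^+)x_i+c_i+x_{K+1}\le0\text{ and }p^+x_i+x_{K+1}\le0\ \forall i\in[K]\}\subseteq\Bigl\{x\in\mathbb{R}^{K+1}:\sum_{i=1}^K(p^+c_i+b_i)x_i+x_{K+1}\le0\Bigr\}.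 \]
   Context: Interpretation: in a classification problem with labels $Y\in[K]$, prediction $\hat Y$, group attribute $A\in\{0,1\}$ and memorization indicator $D$ (with $\hat Y=Y$ a.s. on $D=1$), $p_D=\mathbb{P}(D=1)$, $p^+=\mathbb{P}(A=1)$, $q_y=\mathbb{P}(Y=y\mid D=1)$, $q_y^+=\mathbb{P}(Y=y,A=1\mid D=1)$, $\varphi^{\pm}_y=\mathbb{P}(\hat Y=y\mid D=0,A=1\text{ resp. }0)$; the displayed formula is the statistical parity gap of the memorizing classifier. In this result $\varphi^\pm$, $p_D$, $p^+$ are treated as fixed parameters independent of the unknowns $(q_y,q_y^+)$. *)

(* Defs.v *)
From HB Require Import structures.
From mathcomp Require Import all_boot all_order all_algebra.
From mathcomp Require Import reals.
Set Implicit Arguments. Unset Strict Implicit. Unset Printing Implicit Defensive.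
Import Order.TTheory GRing.Theory Num.Theory.
Local Open Scope ring_scope.

Section Defs.
Variables (R : realType) (K : nat).

Definition qplus (qp : 'I_K -> R) : R := \sum_(y < K) qp y.

Definition dsp (pD pp : R) (phip phim q qp : 'I_K -> R) (yh : 'I_K) : R :=
  pD / (pp * (1 - pp)) *
    (phip yh * (pp - qplus qp) - (q yh * pp - qp yh))
  + (phip yh - phim yh) * (1 - pD * ((1 - qplus qp) / (1 - pp))).

Definition bcoef (pD pp : R) (phip phim : 'I_K -> R) (y : 'I_K) : R :=
  pp * (1 - pp) * ((1 - pD) / pD) * (phip y - phim y).

Definition ccoef (pp : R) (phip phim : 'I_K -> R) (y : 'I_K) : R :=
  (1 - pp) * phip y + pp * phim y.

Definition prob_vec (phi : 'I_K -> R) : Prop :=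
  (forall y, 0 <= phi y) /\ \sum_(y < K) phi y = 1.

End Defs.

(* Main.v *)
Require Import Defs.
From HB Require Import structures.
From mathcomp Require Import all_boot all_order all_algebra.
From mathcomp Require Import reals ring lra.
Import Order.TTheory GRing.Theory Num.Theory.
Local Open Scope ring_scope.

Lemma dsp_E (R : realType) (K : nat) (pD pp : R) (phip phim q qp : 'I_K -> R) yh :
  pD != 0 -> pp != 0 -> 1 - pp != 0 ->
  dsp pD pp phip phim q qp yh = - (pD / (pp * (1 - pp))) *
   (pp * q yh - qp yh - (pp - qplus qp) * ccoef pp phip phim yh - bcoef pD pp phip phim yh).
Proof.
move=> h1 h2 h3; rewrite /dsp /bcoef /ccoef. field. by rewrite h1 h2 h3.
Qed.

Lemma sum_ind (R : realType) K (f : 'I_K -> R) (S1 S2 : {set 'I_K}) (al be : R) :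
  \sum_j f j * - (al * (j \in S1)%:R + be * (j \in S2)%:R) =
  - (al * \sum_(j in S1) f j + be * \sum_(j in S2) f j).
Proof.
have e : forall S : {set 'I_K}, \sum_j f j * (j \in S)%:R = \sum_(j in S) f j.
  move=> S; rewrite [RHS]big_mkcond; apply: eq_bigr => j _.
  by case: (j \in S); rewrite ?mulr1 ?mulr0.
rewrite -(e S1) -(e S2) !mulr_sumr -big_split -sumrN /=.
by apply: eq_bigr => j _; ring.
Qed.

Lemma weak_dual (R : realType) K (pp : R) (c b q qp x : 'I_K -> R) (t : R) :
  (forall y, pp * q y - qp y - (pp - qplus qp) * c y - b y = 0) ->
  \sum_(y < K) q y = 1 -> (forall y, 0 <= qp y <= q y) ->
  (forall i, - (1 - pp) * x i + \sum_(j < K) c j * x j + t <= 0 /\ pp * x i + t <= 0) ->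
  \sum_(i < K) (pp * c i + b i) * x i + t <= 0.
Proof.
move=> E sq hq hx.
set Q := qplus qp; set C := \sum_(j < K) c j * x j.
have -> : \sum_(i < K) (pp * c i + b i) * x i + t =
   \sum_i ((q i - qp i) * (pp * x i + t)) + \sum_i (qp i * (- (1 - pp) * x i + C + t)).
  have e1 : forall i, (pp * c i + b i) * x i = pp * (q i * x i) - qp i * x i + Q * (c i * x i).
    by move=> i; rewrite -(subr0_eq (E i)); rewrite -/Q; ring.
  rewrite (eq_bigr _ (fun i _ => e1 i)).
  have e2 : forall i, (q i - qp i) * (pp * x i + t) + qp i * (- (1 - pp) * x i + C + t)
     = pp * (q i * x i) - qp i * x i + (t * q i + C * qp i).
    by move=> i; ring.
  rewrite -big_split /= (eq_bigr _ (fun i _ => e2 i)).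
  rewrite !big_split /= -!mulr_sumr -/C sq /Q /qplus; ring.
have s1 : \sum_i (q i - qp i) * (pp * x i + t) <= 0.
  apply: sumr_le0 => i _; have [h1 h2] := hx i; have := hq i.
  by move=> /andP[a1 a2]; apply: mulr_ge0_le0 => //; rewrite subr_ge0.
have s2 : \sum_i qp i * (- (1 - pp) * x i + C + t) <= 0.
  apply: sumr_le0 => i _; have [h1 h2] := hx i; have := hq i.
  by move=> /andP[a1 a2]; apply: mulr_ge0_le0.
lra.
Qed.

Lemma strong_dual (R : realType) K (pp : R) (c b : 'I_K -> R) :
  (1 <= K)%N -> 0 < pp < 1 -> \sum_(y < K) c y = 1 -> \sum_(y < K) b y = 0 ->
  (forall (x : 'I_K -> R) (xK1 : R),
      (forall i, - (1 - pp) * x i + \sum_(j < K) c j * x j + xK1 <= 0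
                 /\ pp * x i + xK1 <= 0) ->
      \sum_(i < K) (pp * c i + b i) * x i + xK1 <= 0) ->
  exists q qp : 'I_K -> R,
      (forall y, pp * q y - qp y - (pp - qplus qp) * c y - b y = 0) /\
      \sum_(y < K) q y = 1 /\ (forall y, 0 <= qp y <= q y).
Proof.
move=> K1 /andP[pp0 pp1] sc sb H.
pose a y := pp * c y + b y.
pose cS (S : {set 'I_K}) := \sum_(y in S) c y.
pose aS (S : {set 'I_K}) := \sum_(y in S) a y.
have dual : forall (S1 S2 : {set 'I_K}) (al be : R), 0 <= al -> 0 <= be ->
    (1 - pp) * (al + be) <= al * cS S1 + be * cS S2 -> 0 <= al * aS S1 + be * aS S2.
  move=> S1 S2 al be al0 be0 hc; rewrite /cS /aS /a in hc *.
  have := H (fun j => - (al * (j \in S1)%:R + be * (j \in S2)%:R)) 0.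
  rewrite !sum_ind => H'.
  have : - (al * \sum_(j in S1) (pp * c j + b j) + be * \sum_(j in S2) (pp * c j + b j)) + 0 <= 0.
    apply: H' => i; rewrite addr0 addr0.
    by case: (i \in S1); case: (i \in S2); rewrite /= ?mulr1 ?mulr0; split; nra.
  by rewrite addr0 oppr_le0.
have single : forall S, 1 - pp <= cS S -> 0 <= aS S.
  move=> S h; have h' := dual S S 1 0 ler01 (lexx 0).
  have : 0 <= 1 * aS S + 0 * aS S by apply: h'; lra.
  lra.
pose Lb S := if cS S < 1 - pp then - aS S / ((1 - pp) - cS S) else 0.
pose Qs := \big[Num.max/0]_(S : {set 'I_K}) Lb S.
have LbQ : forall S, Lb S <= Qs by move=> S; rewrite /Qs (bigD1 S) //= le_max lexx.
have key : forall S, Qs * cS S - aS S <= (1 - pp) * Qs.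
  move=> S; case: (ltgtP (cS S) (1 - pp)) => h.
  - have := LbQ S; rewrite /Lb h ler_pdivrMr ?subr_gt0 //; nra.
  - have : Qs * (cS S - (1 - pp)) <= aS S.
      rewrite /Qs; apply: (big_ind (fun v => v * (cS S - (1 - pp)) <= aS S)).
      + by rewrite mul0r; apply: single; lra.
      + by move=> x y hx hy; rewrite /Order.max; case: ifP.
      + move=> S2 _; rewrite /Lb; case: ifP => h2; last by rewrite mul0r; apply: single; lra.
        have := dual S S2 (1 - pp - cS S2) (cS S - (1 - pp)).
        move=> /(_ _ _ _) hd.
        have {hd} hd : 0 <= (1 - pp - cS S2) * aS S + (cS S - (1 - pp)) * aS S2.
          by apply: hd; nra.
        rewrite mulrAC ler_pdivrMr ?subr_gt0 //; nra.
    nra.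
  - have hs : 0 <= aS S by apply: single; rewrite h.
    rewrite h; lra.
pose Sq := [set y | 0 < Qs * c y - a y].
have smax : \sum_y Num.max 0 (Qs * c y - a y) = Qs * cS Sq - aS Sq.
  rewrite /cS /aS mulr_sumr -sumrB [RHS]big_mkcond /=; apply: eq_bigr => y _; rewrite inE.
  by rewrite /Order.max; case: ifP.
pose m y := Num.max 0 (Qs * c y - a y) / (1 - pp).
pose y0 : 'I_K := Ordinal K1.
pose s := Qs - \sum_y m y.
pose qp y := m y + (if y == y0 then s else 0).
pose q y := (qp y + (pp - Qs) * c y + b y) / pp.
have Qq : qplus qp = Qs.
  rewrite /qplus /qp big_split /= -big_mkcond big_pred1_eq /s; ring.
have ppn : pp != 0 by rewrite gt_eqF.
have ppn1 : 1 - pp != 0 by rewrite gt_eqF // subr_gt0.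
exists q, qp; split; [|split].
- move=> y; move: Qq; rewrite /qplus => ->; rewrite /q; field; exact: ppn.
- rewrite /q -mulr_suml !big_split /= -mulr_sumr sc sb -big_mkcond big_pred1_eq /s; field; exact: ppn.
move=> y.
have mx0 : 0 <= Num.max 0 (Qs * c y - a y) by rewrite le_max lexx.
have mx1 : Qs * c y - a y <= Num.max 0 (Qs * c y - a y) by rewrite le_max lexx orbT.
have m0 : 0 <= m y by rewrite /m divr_ge0 // subr_ge0 ltW.
have hm : m y * (1 - pp) = Num.max 0 (Qs * c y - a y) by rewrite /m divfK.
have s0 : 0 <= s.
  rewrite /s subr_ge0 /m -mulr_suml smax ler_pdivrMr ?subr_gt0 //; have := key Sq; nra.
have hqp : m y <= qp y by rewrite /qp; case: (y == y0); lra.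
apply/andP; split; first lra.
rewrite /q ler_pdivlMr //.
rewrite /a in mx1; nra.
Qed.

Theorem theorem9 (R : realType) (K : nat) (pD pp : R) (phip phim : 'I_K -> R) :
  (1 <= K)%N -> 0 < pD <= 1 -> 0 < pp < 1 ->
  prob_vec phip -> prob_vec phim ->
  (forall q qp : 'I_K -> R,
     ((\sum_(y < K) q y = 1 /\ (forall y, 0 <= qp y <= q y) /\
       (forall yh, dsp pD pp phip phim q qp yh = 0))
      <->
      ((forall y, pp * q y - qp y - (pp - qplus qp) * ccoef pp phip phim y
                  - bcoef pD pp phip phim y = 0) /\
       \sum_(y < K) q y = 1 /\ (forall y, 0 <= qp y <= q y))))
  /\
  ((exists q qp : 'I_K -> R,
      (forall y, pp * q y - qp y - (pp - qplus qp) * ccoef pp phip phim y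
                 - bcoef pD pp phip phim y = 0) /\
      \sum_(y < K) q y = 1 /\ (forall y, 0 <= qp y <= q y))
   <->
   (forall (x : 'I_K -> R) (xK1 : R),
      (forall i, - (1 - pp) * x i + \sum_(j < K) ccoef pp phip phim j * x j + xK1 <= 0
                 /\ pp * x i + xK1 <= 0) ->
      \sum_(i < K) (pp * ccoef pp phip phim i + bcoef pD pp phip phim i) * x i + xK1 <= 0)).
Proof.
move=> K1 /andP[pD0 pD1] /andP[pp0 pp1] [_ sp] [_ sm].
have pDn : pD != 0 by rewrite gt_eqF.
have ppn : pp != 0 by rewrite gt_eqF.
have ppn1 : 1 - pp != 0 by rewrite gt_eqF // subr_gt0.
have kn : - (pD / (pp * (1 - pp))) != 0.
  by rewrite oppr_eq0 mulf_neq0 // invr_eq0 mulf_neq0.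
have sc : \sum_(y < K) ccoef pp phip phim y = 1.
  by rewrite /ccoef big_split /= -!mulr_sumr sp sm; ring.
have sb : \sum_(y < K) bcoef pD pp phip phim y = 0.
  by rewrite /bcoef -mulr_sumr sumrB sp sm subrr mulr0.
split.
  move=> q qp; split.
    move=> [h1 [h2 h3]]; split => // y.
    by have := h3 y; rewrite dsp_E // => /eqP; rewrite mulf_eq0 (negbTE kn) /= => /eqP.
  move=> [h1 [h2 h3]]; split => //; split => // yh.
  by rewrite dsp_E // h1 mulr0.
split.
  move=> [q [qp [E [sq hq]]]] x t hx.
  exact: (weak_dual _ _ _ _ _ _ _ _ _ E sq hq hx).
by apply: strong_dual => //; rewrite pp0 pp1.
Qed.
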